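(* Let $(M,\cdot,1)$ be a monoid without a zero element, $\Sigma$ a finite alphabet, and $(g_h,h)$ a maximal factorization on $L$. Then $\mathcal{R}_L=\mathrm{RcgCap}^{(g_h,h)}_L$.
   Context: $L$ is the set of all functions $\Sigma^*\to M$; $\varepsilon$ the empty word; $(m\cdot\ell)(\gamma)=m\cdot\ell(\gamma)$; $\Delta_\alpha(\ell)(\gamma)=\ell(\alpha\gamma)$. A factorization on $L$ is a pair $g:L\to M$, $f:L\to L$ with $g(\ell)\cdot f(\ell)=\ell$ for all $\ell$; it is maximal if moreover $f(m\cdot\ell)=f(\ell)$ for all $\ell\in L$, $m\in M$. Define $S^{(g,f)}_\varepsilon=\mathrm{id}_L$, $S^{(g,f)}_{\alpha\sigma}=f\circ\Delta_\sigma\circ S^{(g,f)}_\alpha$. An $M$-DFA is $(Q,\Sigma,u,i_u,\delta,w,\rho)$ with $Q$ finite nonempty, initial state $u$, initial value $i_u\in M$, $\delta:Q\times\Sigma\to Q$, $w:Q\times\Sigma\to M$, $\rho:Q\to M$; with $q\alpha$ the extended transition and $w^*(q,\varepsilon)=1$, $w^*(q,\alpha\sigma)=w^*(q,\alpha)\cdot w(q\alpha,\sigma)$, it recognizes $\alpha\mapsto i_u\cdot w^*(u,\alpha)\cdot\rho(u\alpha)$. $\mathcal{R}_L$ is the set of $M$-languages recognized by some $M$-DFA. For a factorization $(g,f)$, $\mathrm{RcgCap}^{(g,f)}_L$ is the set of $\ell\in L$ such that the automaton $N^{(g,f)}(f(\ell),1)$ is an $M$-DFA, i.e. such that $\{S^{(g,f)}_\alpha(f(\ell))\mid\alpha\in\Sigma^*\}$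 is finite; here $N^{(g,f)}(\ell',m)$ has states $S^{(g,f)}_\alpha(\ell')$, initial state $\ell'$, initial value $m$, $\delta(S^{(g,f)}_\alpha(\ell'),\sigma)=S^{(g,f)}_{\alpha\sigma}(\ell')$, $w(S^{(g,f)}_\alpha(\ell'),\sigma)=g(\Delta_\sigma(S^{(g,f)}_\alpha(\ell')))$, $\rho(S^{(g,f)}_\alpha(\ell'))=(S^{(g,f)}_\alpha(\ell'))(\varepsilon)$. *)

(* Defs.v *)
From mathcomp Require Import all_boot.
Set Implicit Arguments. Unset Strict Implicit. Unset Printing Implicit Defensive.

Record is_monoid (M : Type) (mul : M -> M -> M) (one : M) : Prop := {
  monoid_mulA : forall a b c, mul a (mul b c) = mul (mul a b) c;
  monoid_mul1m : forall a, mul one a = a;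
  monoid_mulm1 : forall a, mul a one = a }.

Definition is_zero_elt (M : Type) (mul : M -> M -> M) (z : M) : Prop :=
  forall m, mul z m = z /\ mul m z = z.

Definition lang (Sigma : Type) (M : Type) := seq Sigma -> M.

Definition lscale (Sigma M : Type) (mul : M -> M -> M) (m : M) (l : lang Sigma M)
  : lang Sigma M := fun gamma => mul m (l gamma).

Definition Delta (Sigma M : Type) (a : Sigma) (l : lang Sigma M) : lang Sigma M :=
  fun gamma => l (a :: gamma).

Definition factorization (Sigma M : Type) (mul : M -> M -> M)
  (g : lang Sigma M -> M) (f : lang Sigma M -> lang Sigma M) : Prop :=
  forall l, lscale mul (g l) (f l) = l.

Definition maximal_factorization (Sigma M : Type) (mul : M -> M -> M)
  (g : lang Sigma M -> M) (f : lang Sigma M -> lang Sigma M) : Prop :=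
  factorization mul g f /\ forall l m, f (lscale mul m l) = f l.

(* S_eps = id, S_{alpha sigma} = f o Delta_sigma o S_alpha
   (left fold over the word: the last letter is applied last). *)
Definition Sfg (Sigma M : Type) (f : lang Sigma M -> lang Sigma M)
  (alpha : seq Sigma) (l : lang Sigma M) : lang Sigma M :=
  foldl (fun l' s => f (Delta s l')) l alpha.

Definition dstar (Q Sigma : Type) (delta : Q -> Sigma -> Q) (q : Q) (alpha : seq Sigma) : Q :=
  foldl delta q alpha.

(* Extended weight: w*(q,eps) = 1, w*(q, alpha sigma) = w*(q,alpha) * w(q alpha, sigma). *)
Definition wstar (Q Sigma M : Type) (mul : M -> M -> M) (one : M)
  (delta : Q -> Sigma -> Q) (w : Q -> Sigma -> M) (q : Q) (alpha : seq Sigma) : M :=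
  (foldl (fun (p : Q * M) s => (delta p.1 s, mul p.2 (w p.1 s))) (q, one) alpha).2.

Definition dfa_lang (Q Sigma M : Type) (mul : M -> M -> M) (one : M)
  (u : Q) (iu : M) (delta : Q -> Sigma -> Q) (w : Q -> Sigma -> M) (rho : Q -> M)
  : lang Sigma M :=
  fun alpha => mul (mul iu (wstar mul one delta w u alpha)) (rho (dstar delta u alpha)).

(* R_L : languages recognized by some M-DFA (finite state set Q, nonempty
   since it contains the initial state u). *)
Definition recognizable (Sigma M : Type) (mul : M -> M -> M) (one : M)
  (l : lang Sigma M) : Prop :=
  exists (Q : finType) (u : Q) (iu : M) (delta : Q -> Sigma -> Q)
         (w : Q -> Sigma -> M) (rho : Q -> M),
    l = dfa_lang mul one u iu delta w rho.

Definition finite_range (A Sigma M : Type) (F : A -> lang Sigma M) : Prop :=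
  exists (n : nat) (e : 'I_n -> lang Sigma M), forall a, exists i, F a = e i.

Definition RcgCap (Sigma M : Type) (f : lang Sigma M -> lang Sigma M)
  (l : lang Sigma M) : Prop :=
  finite_range (fun alpha : seq Sigma => Sfg f alpha (f l)).

(* Main.v *)
From Stdlib Require Import ClassicalEpsilon FunctionalExtensionality.
Require Import Defs.
From mathcomp Require Import all_boot.

Section Aux.
Variables (Q Sigma M : Type) (mul : M -> M -> M) (one : M).
Hypothesis HM : is_monoid mul one.
Variables (delta : Q -> Sigma -> Q) (w : Q -> Sigma -> M).

Lemma foldF_snd : forall (gm : seq Sigma) q m,
  (foldl (fun (p : Q * M) s => (delta p.1 s, mul p.2 (w p.1 s))) (q, m) gm).2
  = mul m (foldl (fun (p : Q * M) s => (delta p.1 s, mul p.2 (w p.1 s))) (q, one) gm).2.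
Proof.
elim=> [|s gm IH] q m /=; first by rewrite (monoid_mulm1 HM).
rewrite (IH _ (mul m _)) (IH _ (mul one _)) (monoid_mul1m HM) (monoid_mulA HM).
done.
Qed.

Lemma wstar_cons q s gm :
  wstar mul one delta w q (s :: gm) = mul (w q s) (wstar mul one delta w (delta q s) gm).
Proof. by rewrite /wstar /= foldF_snd (monoid_mul1m HM). Qed.
End Aux.

Theorem lemma6 (M : Type) (mul : M -> M -> M) (one : M)
  (HM : is_monoid mul one) (Hnozero : ~ exists z : M, is_zero_elt mul z)
  (Sigma : finType)
  (g : lang Sigma M -> M) (h : lang Sigma M -> lang Sigma M)
  (Hmax : maximal_factorization mul g h) :
  forall l : lang Sigma M, recognizable mul one l <-> RcgCap h l.
Proof.
case: Hmax => Hfact Hmaxi.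
have Sfg_rcons : forall p s X, Sfg h (rcons p s) X = h (Delta s (Sfg h p X)).
  by move=> p s X; rewrite /Sfg foldl_rcons.
have fact_at : forall X t, X t = mul (g X) (h X t).
  by move=> X t; rewrite -{1}(Hfact X).
move=> l; split.
- case=> Q [u [iu [delta [w [rho ->]]]]].
  set L := fun q (gm : seq Sigma) =>
    mul (wstar mul one delta w q gm) (rho (dstar delta q gm)).
  have El : dfa_lang mul one u iu delta w rho = lscale mul iu (L u).
    by apply: functional_extensionality => a; rewrite /dfa_lang /lscale /L (monoid_mulA HM).
  have DL : forall q s, Delta s (L q) = lscale mul (w q s) (L (delta q s)).
    move=> q s; apply: functional_extensionality => gm.
    by rewrite /Delta /L /lscale wstar_cons // (monoid_mulA HM).
  have hD : forall s X, h (Delta s (h X)) = h (Delta s X).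
    move=> s X.
    transitivity (h (Delta s (lscale mul (g X) (h X)))); last by rewrite Hfact.
    exact: (esym (Hmaxi _ _)).
  have claim : forall a q, Sfg h a (h (L q)) = h (L (dstar delta q a)).
    elim=> [|s a IH] q; first by [].
    have -> : Sfg h (s :: a) (h (L q)) = Sfg h a (h (Delta s (h (L q)))) by [].
    by rewrite hD DL Hmaxi IH.
  exists #|Q|, (fun i => h (L (enum_val i))) => a.
  exists (enum_rank (dstar delta u a)); rewrite enum_rankK El Hmaxi.
  exact: claim.
- case=> n [e He].
  set S := fun b => Sfg h b (h l).
  pose idx := fun a => proj1_sig (constructive_indefinite_description _ (He a)).
  have idxP : forall a, S a = e (idx a).
    by move=> a; rewrite /idx; case: constructive_indefinite_description.
  pose pick := fun i => epsilon (inhabits [::]) (fun b => e i = S b).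
  pose delta := fun i s => idx (rcons (pick i) s).
  pose w := fun i s => g (Delta s (e i)).
  have inr : forall i s, (exists b, e i = S b) ->
      e (delta i s) = h (Delta s (e i)) /\ exists b, e (delta i s) = S b.
    move=> i s Hi.
    have Hp : e i = S (pick i) by apply: (epsilon_spec _ (fun b => e i = S b)).
    have E : e (delta i s) = S (rcons (pick i) s) by rewrite /delta -idxP.
    split; last by exists (rcons (pick i) s).
    by rewrite E /S Sfg_rcons -/(S (pick i)) -Hp.
  have claim : forall a i, (exists b, e i = S b) -> forall gm,
      e i (a ++ gm) = mul (wstar mul one delta w i a) (e (dstar delta i a) gm).
    elim=> [|s a IH] i Hi gm /=.
      by rewrite /wstar /= (monoid_mul1m HM).
    have [E1 E2] := inr i s Hi.
    rewrite wstar_cons //.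
    have -> : e i (s :: a ++ gm) = Delta s (e i) (a ++ gm) by [].
    rewrite fact_at -E1 (IH _ E2) (monoid_mulA HM).
    done.
  exists ('I_n : finType), (idx [::]), (g l), delta, w, (fun i => e i [::]).
  apply: functional_extensionality => a.
  rewrite /dfa_lang fact_at.
  have -> : h l = e (idx [::]) by rewrite -idxP.
  rewrite -{1}(cats0 a) claim; last by exists [::]; rewrite -idxP.
  by rewrite (monoid_mulA HM).
Qed.
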